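(* Let $\Gamma$ be a connected $\mathbb Z$-leg-weighted graph, $w\in W(\Gamma)$ a weighting, and $\gamma$ a positive cycle for $w$. Let $\Gamma/\gamma$ be the graph obtained from $\Gamma$ by contracting every edge of $\gamma$, and $w|_{\Gamma/\gamma}$ the restricted weighting. Then $$c_w = c_{w|_{\Gamma/\gamma}}\times\{\mathbf 0\},$$ where $c_{w|_{\Gamma/\gamma}}\subseteq\mathbb Q_{\ge0}^{E(\Gamma/\gamma)}$ is the cone of the restricted weighting and $\mathbf 0$ is the zero vector of $\mathbb Q_{\ge0}^{E(\gamma)}$ (using $\mathbb Q_{\ge 0}^{E(\Gamma)}=\mathbb Q_{\ge0}^{E(\Gamma/\gamma)}\times\mathbb Q_{\ge0}^{E(\gamma)}$).
   Context: A graph consists of finite sets $V$ (vertices) and $H$ (half-edges), a map $\mathrm{end}\colon H\to V$, an involution $i$ of $H$, a genus $g\colon V\to\mathbb Z_{\ge0}$ and an integer twist $k$. Legs are fixed points of $i$; edges are pairs $\{h,i(h)\}$ with $h\neq i(h)$; a directed edge is a non-leg half-edge $h$ from $\mathrm{end}(h)$ to $\mathrm{end}(i(h))$. $\mathrm{val}(v)$ counts non-leg half-edges at $v$, $\kappa(v)=2g(v)-2+\mathrm{val}(v)$, $g(\Gamma)=b_1(\Gamma)+\sum g(v)$. A cycle is a closed walk of directed edges repeating no vertex or undirected edge. A weighting is $w\colon H\to\mathbb Z$ with $w(h)+w(i(h))=0$ for $h\ne i(h)$ and $\sum_{\mathrm{end}(h)=v}w(h)+k\kappa(v)=0$ for all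 $v$; $W(\Gamma)$ is the set of weightings with prescribed leg values (summing to $-k(2g(\Gamma)-2)$). Contracting edges (merging their endpoints, with genera of merged vertices adding up together with the first Betti number of the contracted subgraph) sends a weighting to a weighting on the contracted graph by restriction to the remaining half-edges. For a directed edge $e$ of a cycle $\gamma$, $w_\gamma(e)$ is the value of $w$ on the half-edge of $e$ at its source. $c_w\subseteq\mathbb Q_{\ge0}^{E}$ is the cone of $t$ with $\sum_{e\in\gamma}w_\gamma(e)t(e)=0$ for all cycles $\gamma$. A positive cycle for $w$ is a cycle $\gamma$ with $w_\gamma(e)>0$ for all $e\in\gamma$. *)

(* Defs.v *)
From mathcomp Require Import all_boot all_order all_algebra.
Set Implicit Arguments. Unset Strict Implicit. Unset Printing Implicit Defensive.
Import Order.TTheory GRing.Theory Num.Theory.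
Local Open Scope ring_scope.

Record graph := Graph {
  gV : finType;
  gH : finType;
  gend : gH -> gV;
  ginv : gH -> gH;
  ginvK : involutive ginv;
  ggen : gV -> nat;
  gtwist : int }.

Section GraphDefs.
Variable G : graph.

Definition is_leg (h : gH G) : bool := ginv h == h.

Definition valence (v : gV G) : nat :=
  #|[set h : gH G | (gend h == v) && ~~ is_leg h]|.

Definition kappa (v : gV G) : int := 2 * (ggen v)%:Z - 2 + (valence v)%:Z.

Definition adj : rel (gV G) :=
  fun u v => [exists h : gH G, [&& ~~ is_leg h, gend h == u & gend (ginv h) == v]].

Definition connected : Prop := forall u v : gV G, connect adj u v.

Definition is_weighting (w : gH G -> int) : Prop :=
  (forall h : gH G, ~~ is_leg h -> w h + w (ginv h) = 0) /\
  (forall v : gV G, \sum_(h : gH G | gend h == v) w h + gtwist G * kappa v = 0).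

(* A cycle: a nonempty sequence of directed edges (non-leg half-edges)
   h_1, ..., h_n, with the target of h_j the source of h_{j+1} (cyclically),
   repeating no vertex (sources pairwise distinct) and no undirected edge
   (the half-edges of s and their partners are pairwise distinct, which also
   forces every h_j to be a non-leg). *)
Definition is_cycle (s : seq (gH G)) : bool :=
  [&& s != [::],
      uniq (s ++ map (@ginv G) s),
      uniq (map (@gend G) s) &
      cycle (fun h h' => gend (ginv h) == gend h') s].

Definition positive_cycle (w : gH G -> int) (s : seq (gH G)) : bool :=
  is_cycle s && all (fun h => w h > 0) s.

Definition edge := {A : {set gH G} | [exists h : gH G, ~~ is_leg h && (A == [set h; ginv h])]}.

(* value of t : Q^E at a set of half-edges (0 if it is not an edge) *)
Definition tvalset (t : edge -> rat) (A : {set gH G}) : rat :=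
  if insub A is Some e then t e else 0.

Definition tval (t : edge -> rat) (h : gH G) : rat := tvalset t [set h; ginv h].

Definition cone (w : gH G -> int) (t : edge -> rat) : Prop :=
  (forall e : edge, 0 <= t e) /\
  (forall s : seq (gH G), is_cycle s ->
     \sum_(h <- s) (w h)%:~R * tval t h = 0).

Definition cyc_hs (s : seq (gH G)) : {set gH G} :=
  [set h | (h \in s) || (ginv h \in s)].

Definition adjS (S : {set gH G}) : rel (gV G) :=
  fun u v => [exists h in S, (gend h == u) && (gend (ginv h) == v)].

Definition rootS (S : {set gH G}) : gV G -> gV G := fingraph.root (adjS S).

Definition cV (S : {set gH G}) : {set gV G} := rootS S @: [set: gV G].

Definition cVt (S : {set gH G}) := {v : gV G | v \in cV S}.
Definition cHt (s : seq (gH G)) := {h : gH G | h \notin cyc_hs s}.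

Lemma cyc_hs_inv (s : seq (gH G)) (h : gH G) :
  (ginv h \notin cyc_hs s) = (h \notin cyc_hs s).
Proof. by rewrite !inE ginvK orbC. Qed.

Definition c_end (s : seq (gH G)) (h : cHt s) : cVt (cyc_hs s) :=
  exist _ (rootS (cyc_hs s) (gend (val h))) (imset_f _ (in_setT _)).

Definition c_inv (s : seq (gH G)) (h : cHt s) : cHt s :=
  exist _ (ginv (val h)) (eq_ind_r is_true (valP h) (cyc_hs_inv s (val h))).

Lemma c_invK (s : seq (gH G)) : involutive (@c_inv s).
Proof. by move=> h; apply: val_inj; rewrite /= ginvK. Qed.

(* genus of a vertex of the contraction: sum of the genera of the merged
   vertices plus the first Betti number (#edges - #vertices + 1) of the
   contracted connected subgraph *)
Definition c_gen (s : seq (gH G)) (v : cVt (cyc_hs s)) : nat :=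
  let S := cyc_hs s in
  (\sum_(u : gV G | rootS S u == val v) ggen u +
   ((#|[set h in S | rootS S (gend h) == val v]| %/ 2 + 1)
      - #|[set u : gV G | rootS S u == val v]|))%N.

Definition contract (s : seq (gH G)) : graph :=
  @Graph (cVt (cyc_hs s)) (cHt s) (@c_end s) (@c_inv s) (@c_invK s)
         (@c_gen s) (gtwist G).

Definition wres (s : seq (gH G)) (w : gH G -> int) : gH (contract s) -> int :=
  fun h => w (val h).

Definition edge_in (s : seq (gH G)) (e : edge) : bool :=
  [exists h : gH G, (h \in s) && (val e == [set h; ginv h])].

End GraphDefs.

Definition tres (G : graph) (s : seq (gH G)) (t : edge G -> rat) : edge (contract s) -> rat :=
  fun e => tvalset t [set val h | h in val e].


Arguments contract {G} s.
Arguments wres {G} s w h.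
Arguments tres {G} s t e.
Arguments edge_in {G} s e.

(* Main.v *)
Require Import Defs.
From mathcomp Require Import all_boot all_order all_algebra.
From mathcomp Require Import zify.
Set Implicit Arguments. Unset Strict Implicit. Unset Printing Implicit Defensive.
Import Order.TTheory GRing.Theory Num.Theory.
Local Open Scope ring_scope.

Section Generic.
Variable G : graph.
Implicit Types (c D : seq (gH G)) (h : gH G).

Definition ecyc : rel (gH G) := fun h h' => gend (ginv h) == gend h'.

Lemma uniq_inv_rot i c : uniq (rot i c ++ map (@ginv G) (rot i c)) = uniq (c ++ map (@ginv G) c).
Proof. apply: perm_uniq; apply: perm_cat; first by rewrite perm_rot.
by apply: perm_map; rewrite perm_rot. Qed.

Lemma is_cycle_rot i c : is_cycle c -> is_cycle (rot i c).
Proof.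
case/and4P=> c0 u1 u2 cy; apply/and4P; split.
- by rewrite -size_eq0 size_rot size_eq0.
- by rewrite uniq_inv_rot.
- by rewrite map_rot rot_uniq.
- by rewrite rot_cycle.
Qed.

Lemma cycle_nonleg c h : is_cycle c -> h \in c -> ~~ is_leg h.
Proof.
case/and4P=> _ u _ _ hc; apply/negP=> /eqP hl.
move: u; rewrite cat_uniq => /and3P [_ /hasPn H _].
by move: (H (ginv h) (map_f _ hc)); rewrite hl hc.
Qed.

Lemma uniq_split (A B : seq (gH G)) :
  uniq ((A ++ B) ++ map (@ginv G) (A ++ B)) ->
  uniq (A ++ map (@ginv G) A) /\ uniq (B ++ map (@ginv G) B).
Proof.
rewrite map_cat.
have P : perm_eq ((A ++ B) ++ map (@ginv G) A ++ map (@ginv G) B)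
                 ((A ++ map (@ginv G) A) ++ B ++ map (@ginv G) B) by rewrite perm_catACA.
by rewrite (perm_uniq P) cat_uniq => /and3P [u1 _ u2].
Qed.

Lemma closed_walk_sum (f : gH G -> rat) :
  (forall c, is_cycle c -> \sum_(h <- c) f h = 0) ->
  forall D, cycle ecyc D -> uniq (D ++ map (@ginv G) D) -> \sum_(h <- D) f h = 0.
Proof.
move=> Hc D; have [n] := ubnP (size D); elim: n D => // n IH D sD cyD uD.
case: D sD cyD uD => [|x0 D'] sD cyD uD; first by rewrite big_nil.
set D := x0 :: D' in sD cyD uD *.
have [uM|nuM] := boolP (uniq (map (@gend G) D)).
  by apply: Hc; apply/and4P; split.
have uD1 : uniq D by move: uD; rewrite cat_uniq => /and3P [].
have [i [j [ij jsz]]] := uniqPn (gend x0) nuM; rewrite size_map in jsz.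
have isz : (i < size D)%N by apply: ltn_trans ij jsz.
rewrite !(nth_map x0) // => ge.
set x := nth x0 D i in ge; set z := nth x0 D j in ge.
have xz : x != z by rewrite nth_uniq // neq_ltn ij.
have xD : x \in D by apply: mem_nth.
have zD : z \in D by apply: mem_nth.
case: (rot_to xD) => k D2 eD.
have zD2 : z \in D2.
  by move: zD; rewrite -(mem_rot k) eD inE eq_sym (negbTE xz).
case: (splitPr zD2) eD => p1 p2 eD.
have -> : \sum_(h <- D) f h = \sum_(h <- rot k D) f h.
  by apply: perm_big; rewrite perm_sym perm_rot.
rewrite eD -cat1s catA big_cat /=.
have := uD; rewrite -(uniq_inv_rot k) eD -cat1s catA => /uniq_split [uA uB].
have := cyD; rewrite -(rot_cycle k) eD /= rcons_cat rcons_cons cat_path /=.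
rewrite rcons_path.
move=> /andP [pA] /andP [eB] /andP [pB eA].
have szD : size D = (size (x :: p1) + size (z :: p2))%N.
  by rewrite -(size_rot k) eD /= size_cat.
rewrite szD /= addSn addnS !ltnS in sD.
have -> : \sum_(h <- x :: p1) f h = 0.
  apply: IH uA; last by rewrite cat1s /= rcons_path pA /= /ecyc ge; exact: eB.
  by rewrite cat1s /=; apply: leq_ltn_trans sD; rewrite ltnS leq_addr.
have -> : \sum_(h <- z :: p2) f h = 0.
  apply: IH uB; last by rewrite /= rcons_path pB /= /ecyc -ge; exact: eA.
  by rewrite /=; apply: leq_ltn_trans sD; rewrite ltnS leq_addl.
by rewrite addr0.
Qed.

End Generic.

Lemma tvalset_ge0 (G : graph) (t : edge G -> rat) A : (forall e, 0 <= t e) -> 0 <= tvalset t A.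
Proof. by move=> H; rewrite /tvalset; case: insub. Qed.

Lemma tval_ge0 (G : graph) (t : edge G -> rat) h : (forall e, 0 <= t e) -> 0 <= Defs.tval t h.
Proof. exact: tvalset_ge0. Qed.

Lemma tval_inv (G : graph) (t : edge G -> rat) h : Defs.tval t (ginv h) = Defs.tval t h.
Proof. by rewrite /Defs.tval ginvK setUC. Qed.

Lemma tval_edge (G : graph) (t : edge G -> rat) (e : edge G) h :
  val e = [set h; ginv h] -> Defs.tval t h = t e.
Proof. by move=> E; rewrite /Defs.tval /tvalset -E valK. Qed.

Lemma sum_ge0_eq0 (T : eqType) (F : T -> rat) (r : seq T) :
  (forall x, x \in r -> 0 <= F x) -> \sum_(x <- r) F x = 0 -> forall x, x \in r -> F x = 0.
Proof.
elim: r => // y r IH H; rewrite big_cons => E.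
have Hy : 0 <= F y by apply: H; rewrite mem_head.
have Hr : 0 <= \sum_(x <- r) F x.
  rewrite big_seq; apply: sumr_ge0 => x xr; apply: H; by rewrite inE xr orbT.
move/eqP: E; rewrite paddr_eq0 // => /andP [/eqP Fy /eqP Sr] x.
rewrite inE => /orP [/eqP -> // | xr].
by apply: IH xr => // z zr; apply: H; rewrite inE zr orbT.
Qed.

Lemma cycle_filter (T : Type) (R : rel T) (P : pred T) :
  (forall u m v, ~~ P m -> R u m -> R m v -> R u v) ->
  forall C, cycle R C -> cycle R (filter P C).
Proof.
move=> Htr.
have Hp : forall p x y, path R x (rcons p y) -> path R x (rcons (filter P p) y).
  elim=> [|m p IH] x y; first by [].
  rewrite rcons_cons /= => /andP [xm pm]; case: ifP => Pm /=.
    by rewrite xm IH.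
  have := IH _ _ pm; case: (filter P p) => [|z q] /=.
    by case/andP=> my _; rewrite (Htr _ _ _ (negbT Pm) xm my).
  by case/andP=> mz ->; rewrite (Htr _ _ _ (negbT Pm) xm mz).
case=> [//|x p] /=; case: ifP => Px /=.
  by apply: Hp.
move=> H; have := Hp _ _ _ H; case: (filter P p) => [//|z q] /=.
case/andP=> xz; rewrite rcons_path => /andP [pq lx].
by rewrite rcons_path pq /= (Htr _ _ _ (negbT Px) lx xz).
Qed.

Section Contract.
Variable G : graph.
Variable s : seq (gH G).
Hypothesis Hs : is_cycle s.

Local Notation S := (cyc_hs s).
Definition Vg : {set gV G} := [set gend h | h in s].
Local Notation r := (rootS S).

Lemma inS_inv h : (ginv h \in S) = (h \in S).
Proof. by rewrite !inE ginvK orbC. Qed.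

Lemma s_next_end h : h \in s -> gend (ginv h) \in Vg.
Proof.
move=> hs; case/and4P: Hs => _ _ _ cy.
have := next_cycle cy hs; rewrite /= => /eqP ->.
by apply: imset_f; rewrite mem_next.
Qed.

Lemma S_end h : h \in S -> (gend h \in Vg) && (gend (ginv h) \in Vg).
Proof.
rewrite inE => /orP [hs|hs].
  by rewrite s_next_end // andbT; apply: imset_f.
rewrite -{1}(ginvK h) (s_next_end hs) /=; exact: imset_f.
Qed.

Lemma adjS_sym : symmetric (adjS S).
Proof.
suff H u v : adjS S u v -> adjS S v u by move=> u v; apply/idP/idP; apply: H.
case/existsP=> h /andP [hS /andP [/eqP hu /eqP hv]].
apply/existsP; exists (ginv h); rewrite ginvK hu hv !eqxx !andbT.
by rewrite inS_inv.
Qed.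

Lemma adjS_Vg u v : adjS S u v -> (u \in Vg) && (v \in Vg).
Proof. by case/existsP=> h /andP [hS /andP [/eqP <- /eqP <-]]; exact: S_end. Qed.

Lemma path_conn x p : {subset x :: p <= s} -> path (@ecyc G) x p ->
  forall y, y \in p -> connect (adjS S) (gend x) (gend y).
Proof.
elim: p x => // z p IH x sub /= /andP [exz pz] y.
have a1 : adjS S (gend x) (gend z).
  apply/existsP; exists x; rewrite -(eqP exz) !eqxx !andbT inE (sub x) ?mem_head //.
rewrite inE => /orP [/eqP -> | yp]; first exact: connect1.
apply: connect_trans (connect1 a1) (IH z _ pz y yp).
by move=> u uin; apply: sub; rewrite inE uin orbT.
Qed.

Lemma Vg_conn x y : x \in Vg -> y \in Vg -> connect (adjS S) x y.
Proof.
case/and4P: Hs => s0 _ _ cy.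
have [h0 [q Es]] : exists h0 q, s = h0 :: q by case: (s) s0 => [//|a b] _; exists a, b.
have key : forall h, h \in s -> connect (adjS S) (gend h0) (gend h).
  move=> h; rewrite {1}Es inE => /orP [/eqP -> | hq]; first exact: connect0.
  rewrite Es /= rcons_path in cy; case/andP: cy => pq _.
  by apply: (path_conn _ pq hq) => u; rewrite Es.
have csym := sym_connect_sym adjS_sym.
case/imsetP=> hx hxs -> /imsetP [hy hys ->].
by apply: connect_trans (key _ hys); rewrite csym; apply: key.
Qed.

Lemma conn_cases x y : connect (adjS S) x y -> (x == y) || ((x \in Vg) && (y \in Vg)).
Proof.
case/connectP=> p; case: p => [_ -> | z p] /=; first by rewrite eqxx.
case/andP=> /adjS_Vg /andP [xV zV] pp ->.
suff -> : last z p \in Vg by rewrite xV orbT.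
elim: p z zV pp => //= u p IH z zV /andP [/adjS_Vg /andP [_ uV] pp].
exact: IH uV pp.
Qed.

Lemma rootE x y : (r x == r y) = (x == y) || ((x \in Vg) && (y \in Vg)).
Proof.
rewrite /rootS; apply/eqP/idP.
  by move/(fingraph.rootP (sym_connect_sym adjS_sym)); exact: conn_cases.
move=> H; apply/(fingraph.rootP (sym_connect_sym adjS_sym)).
case/orP: H => [/eqP -> | /andP [xV yV]]; [exact: connect0 | exact: Vg_conn].
Qed.


Lemma tval_gamma (t : edge G -> rat) : (forall e, edge_in s e -> t e = 0) ->
  forall h, h \in S -> Defs.tval t h = 0.
Proof.
move=> Hz.
have H1 : forall h, h \in s -> Defs.tval t h = 0.
  move=> h hs; rewrite /Defs.tval /tvalset; case: insubP => // e _ Ee.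
  by apply: Hz; apply/existsP; exists h; rewrite hs Ee eqxx.
move=> h; rewrite inE => /orP [hs|hs]; first exact: H1.
by rewrite -tval_inv; apply: H1.
Qed.

Lemma is_leg_c (h : gH (contract s)) : is_leg h = is_leg (val h).
Proof. by rewrite /is_leg -val_eqE. Qed.

Lemma tval_c (t : edge G -> rat) (h : gH (contract s)) :
  ~~ is_leg h -> Defs.tval (tres s t) h = Defs.tval t (val h).
Proof.
move=> nl.
have He : [exists h' : gH (contract s), ~~ is_leg h' && ([set h; ginv h] == [set h'; ginv h'])].
  by apply/existsP; exists h; rewrite nl eqxx.
rewrite {1}/Defs.tval {1}/tvalset; case: insubP => [e _ Ee | /negP []]; last exact: He.
by rewrite /tres Ee imsetU1 imset_set1.
Qed.


Definition ecycc := fun h h' : gH (contract s) => gend (ginv h) == gend h'.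

Lemma path_lift (v : gH (contract s)) c2 :
  (forall z, z \in c2 -> gend (val z) \notin Vg) ->
  path ecycc v c2 -> path (@ecyc G) (val v) (map val c2).
Proof.
elim: c2 v => //= z c2 IH v Hz /andP [e pz].
rewrite IH ?pz ?andbT //; last by move=> u uc; apply: Hz; rewrite inE uc orbT.
move: e; rewrite /ecycc -val_eqE /= rootE (negbTE (Hz z (mem_head _ _))) andbF orbF.
by [].
Qed.

Lemma lift_sum (F : gH G -> rat) (c : seq (gH (contract s))) :
  (forall h, h \in S -> F h = 0) -> is_cycle c ->
  exists W, [/\ cycle (@ecyc G) W, uniq (W ++ map (@ginv G) W) &
     \sum_(h <- W) F h = \sum_(h <- c) F (val h)].
Proof.
move=> F0 cc.
have [i [v [c2 [Ec Hc2]]]] : exists i v c2, rot i c = v :: c2 /\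
    forall z, z \in c2 -> gend (val z) \notin Vg.
  case: (boolP (has (fun z : gH (contract s) => gend (val z) \in Vg) c)).
    case/hasP => v vc vV; case: (rot_to vc) => i c2 Ec; exists i, v, c2; split => // z zc2.
    apply/negP => zV.
    have := is_cycle_rot i cc; rewrite Ec => /and4P [_ _ u _].
    move: u; rewrite /= => /andP [/negP H _]; apply: H; apply/mapP; exists z => //.
    by apply: val_inj; rewrite /=; apply/eqP; rewrite rootE vV zV orbT.
  move=> N; move: cc => /and4P [c0 _ _ _].
  case Ec: c c0 => [//|v c2] _; exists 0%N, v, c2; rewrite rot0; split => // z zc.
  by apply: (hasPn N); rewrite Ec inE zc orbT.
have cc0 : is_cycle (v :: c2) by rewrite -Ec; apply: is_cycle_rot.
have -> : \sum_(h <- c) F (val h) = \sum_(h <- v :: c2) F (val h).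
  by rewrite -Ec; apply: perm_big; rewrite perm_sym perm_rot.
case/and4P: cc0 => _ u0 _ cy0.
move: cy0; rewrite /= rcons_path => /andP [pc2 ecl].
have pL : path (@ecyc G) (val v) (map val c2) by apply: path_lift.
have eL : r (gend (ginv (val (last v c2)))) = r (gend (val v)).
  by move: ecl; rewrite -val_eqE /= => /eqP.
have EL : (val v :: map val c2) ++ map (@ginv G) (val v :: map val c2) =
          map val ((v :: c2) ++ map (@ginv (contract s)) (v :: c2)).
  by rewrite map_cat /= -!map_comp.
have uL : uniq ((val v :: map val c2) ++ map (@ginv G) (val v :: map val c2)).
  by rewrite EL (map_inj_uniq val_inj).
have [ab|nab] := eqVneq (gend (ginv (val (last v c2)))) (gend (val v)).
  exists (val v :: map val c2); split => //; last by rewrite (_ : val v :: map val c2 = map val (v :: c2)) // big_map.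
  by rewrite /= rcons_path pL /= last_map /ecyc ab.
have := eqxx (r (gend (val v))); rewrite -{1}eL rootE (negbTE nab) /=.
case/andP=> /imsetP [ha has Ea] /imsetP [hb hbs Eb].
have hab : ha != hb by apply: contraNneq nab => E; rewrite Ea Eb E.
case: (rot_to has) => j q Es.
have hbq : hb \in q by move: hbs; rewrite -(mem_rot j) Es inE eq_sym (negbTE hab).
case: (splitPr hbq) Es => p1 p2 Es.
case/and4P: Hs => _ us _ cys.
move: cys; rewrite -(rot_cycle j) Es /= rcons_cat rcons_cons cat_path /=.
case/andP=> pP /andP [eP _].
have := us; rewrite -(uniq_inv_rot j) Es -cat_cons => /uniq_split [uP _].
have Ps : forall x, x \in ha :: p1 -> x \in s.
  by move=> x xP; rewrite -(mem_rot j) Es -cat_cons mem_cat xP.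
exists ((val v :: map val c2) ++ (ha :: p1)); split.
- rewrite /= rcons_cat cat_path pL /= last_map /ecyc -Ea eqxx /=.
  by rewrite rcons_path pP /= /ecyc Eb; exact: eP.
- rewrite map_cat.
  have P : perm_eq (((val v :: map val c2) ++ ha :: p1) ++
                     map (@ginv G) (val v :: map val c2) ++ map (@ginv G) (ha :: p1))
                   (((val v :: map val c2) ++ map (@ginv G) (val v :: map val c2)) ++
                     ((ha :: p1) ++ map (@ginv G) (ha :: p1))) by rewrite perm_catACA.
  rewrite (perm_uniq P) cat_uniq uL uP andbT.
  apply/hasPn => x xP; rewrite EL; apply/negP => /mapP [y _ Ey].
  have : x \in S.
    move: xP; rewrite mem_cat => /orP [xP|/mapP [z zP ->]].
      by rewrite inE Ps.
    by rewrite inS_inv inE Ps.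
  by rewrite Ey (negbTE (valP y)).
- rewrite big_cat /=.
  have -> : \sum_(h <- ha :: p1) F h = 0.
    by apply: big1_seq => h /andP [_ hP]; apply: F0; rewrite inE Ps.
  rewrite addr0.
  by rewrite (_ : val v :: map val c2 = map val (v :: c2)) // big_map.
Qed.


Lemma contract_sum (F : gH G -> rat) (f : gH (contract s) -> rat) :
  (forall h, h \in S -> F h = 0) ->
  (forall h : gH (contract s), ~~ is_leg h -> f h = F (val h)) ->
  (forall c, is_cycle c -> \sum_(h <- c) f h = 0) ->
  forall C, is_cycle C -> \sum_(h <- C) F h = 0.
Proof.
move=> F0 fF Hc C cC.
set D := pmap insub C : seq (gH (contract s)).
have mapD : map val D = filter (fun h => h \notin S) C.
  rewrite (pmap_filter (@insubK _ _ (cHt s))); apply: eq_filter.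
  exact: isSome_insub.
have -> : \sum_(h <- C) F h = \sum_(h <- C | h \notin S) F h.
  rewrite [RHS]big_mkcond; apply: eq_bigr => h _; case: ifP => //.
  by move/negbFE => hS; rewrite F0.
rewrite -big_filter -mapD big_map.
have -> : \sum_(h <- D) F (val h) = \sum_(h <- D) f h.
  apply: eq_big_seq => h hD; rewrite fF //.
  rewrite is_leg_c; apply: (cycle_nonleg cC).
  by rewrite -(mem_pmap_sub C h).
case/and4P: cC => _ uC _ cyC.
apply: closed_walk_sum => //.
- have E : (@ecyc (contract s)) =2 relpre val
      (fun u v : gH G => r (gend (ginv u)) == r (gend v)).
    by move=> u v; rewrite /ecyc /= -val_eqE.
  rewrite (eq_cycle E) -cycle_map mapD.
  apply: cycle_filter.
    move=> u m v; rewrite negbK => /S_end /andP [mV imV] /eqP -> /eqP <-.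
    by rewrite rootE mV imV orbT.
  by apply: sub_cycle cyC => u v /eqP ->.
- apply: (@map_uniq _ _ val).
  rewrite map_cat -map_comp (_ : val \o (@ginv (contract s)) = (@ginv G) \o val) //.
  rewrite map_comp mapD; apply: subseq_uniq uC.
  by apply: cat_subseq; [exact: filter_subseq | apply: map_subseq; exact: filter_subseq].
Qed.

End Contract.

Theorem lemma3p10 (G : graph) (w : gH G -> int) (s : seq (gH G)) :
  connected G -> is_weighting w -> positive_cycle w s ->
  forall t : edge G -> rat,
    cone w t <->
    (cone (wres s w) (tres s t) /\ (forall e : edge G, edge_in s e -> t e = 0)).
Proof.
move=> _ _ /andP [Hs Hpos] t; split.
- case=> Ht0 Htc.
  have Hz : forall e, edge_in s e -> t e = 0.
    move=> e /existsP [h /andP [hs /eqP Ee]].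
    rewrite -(tval_edge t Ee).
    have Hn : forall x, x \in s -> 0 <= (w x)%:~R * Defs.tval t x.
      by move=> x xs; rewrite mulr_ge0 ?tval_ge0 // ler0z ltW // (allP Hpos x xs).
    have := sum_ge0_eq0 Hn (Htc s Hs) hs; move/eqP; rewrite mulf_eq0 => /orP [|/eqP //].
    by rewrite intr_eq0 => /eqP wh; move: (allP Hpos h hs); rewrite wh.
  have F0 := tval_gamma Hz.
  split; last exact: Hz.
  split; first by move=> e; rewrite /tres; exact: tvalset_ge0.
  move=> c cc.
  have -> : \sum_(h <- c) (wres s w h)%:~R * Defs.tval (tres s t) h =
            \sum_(h <- c) (fun x => (w x)%:~R * Defs.tval t x) (val h).
    apply: eq_big_seq => h hc /=; rewrite tval_c //; exact: cycle_nonleg cc hc.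
  have [W [cW uW eW]] := lift_sum Hs (F := fun x => (w x)%:~R * Defs.tval t x)
      (fun h hS => ltac:(by rewrite /= F0 // mulr0)) cc.
  by rewrite -eW; apply: closed_walk_sum Htc W cW uW.
- case=> [[Hc0 Hc1] Hz]; split.
  + move=> e; have := valP e => /existsP [h /andP [nl /eqP Ee]].
    rewrite -(tval_edge t Ee).
    have [hS|hS] := boolP (h \in cyc_hs s); first by rewrite (@tval_gamma G s t Hz h hS).
    pose h' : gH (contract s) := exist _ h hS.
    have nl' : ~~ is_leg h' by rewrite is_leg_c.
    rewrite (_ : h = val h') // -tval_c //; exact: tval_ge0.
  + apply: (contract_sum Hs (f := fun h => (wres s w h)%:~R * Defs.tval (tres s t) h)).
    * by move=> h hS; rewrite (@tval_gamma G s t Hz h hS) mulr0.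
    * by move=> h nl; rewrite /= tval_c.
    * exact: Hc1.
Qed.
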